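(* Let $d\ge 2$ and $0<\delta<\frac{\pi}{2}$. Every convex body $D\subset S^d$ of constant diameter $\delta$ is strictly convex, i.e., $\mathrm{bd}(D)$ contains no arc.
   Context: $S^d$ is the unit sphere in $E^{d+1}$; for non-antipodal points $a,b$, the arc $ab$ is the shorter great-circle arc joining them and $|ab|$ is its length. A set $C\subset S^d$ containing no pair of antipodes is convex if it contains the arc joining any two of its points; a closed convex set with non-empty interior is a convex body. A convex body $D$ of diameter $\delta$ (the maximum spherical distance between two of its points) is of constant diameter $\delta$ if for every $p\in\mathrm{bd}(D)$ there exists $p'\in\mathrm{bd}(D)$ with $|pp'|=\delta$. *)

(* Defs.v *)
From Stdlib Require Import Reals.
Open Scope R_scope.

(* Vectors of E^{n}: functions nat -> R; only coordinates 0..n-1 matter,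
   points of the sphere are required to vanish beyond n. *)
Definition vec := nat -> R.

Fixpoint dot (n : nat) (x y : vec) : R :=
  match n with
  | O => 0
  | S k => dot k x y + x k * y k
  end.

Definition vopp (x : vec) : vec := fun i => - x i.

Definition on_sphere (d : nat) (x : vec) : Prop :=
  dot (S d) x x = 1 /\ forall i, (S d <= i)%nat -> x i = 0.

Definition sdist (d : nat) (x y : vec) : R := acos (dot (S d) x y).

Definition antipodal (x y : vec) : Prop := y = vopp x.

(* the shorter great-circle arc ab (for non-antipodal a, b):
   points of the sphere that are non-negative combinations of a and b *)
Definition arc (d : nat) (a b : vec) (p : vec) : Prop :=
  on_sphere d p /\
  exists s t : R, 0 <= s /\ 0 <= t /\ p = (fun i => s * a i + t * b i).

Definition subset_sphere (d : nat) (C : vec -> Prop) : Prop :=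
  forall x, C x -> on_sphere d x.

Definition spherically_convex (d : nat) (C : vec -> Prop) : Prop :=
  subset_sphere d C /\
  (forall x, C x -> ~ C (vopp x)) /\
  (forall a b p, C a -> C b -> arc d a b p -> C p).

Definition sinterior (d : nat) (C : vec -> Prop) (p : vec) : Prop :=
  on_sphere d p /\
  exists eps, 0 < eps /\ forall q, on_sphere d q -> sdist d p q < eps -> C q.

Definition sclosure (d : nat) (C : vec -> Prop) (p : vec) : Prop :=
  on_sphere d p /\
  forall eps, 0 < eps -> exists q, C q /\ sdist d p q < eps.

Definition sboundary (d : nat) (C : vec -> Prop) (p : vec) : Prop :=
  sclosure d C p /\ ~ sinterior d C p.

Definition sclosed (d : nat) (C : vec -> Prop) : Prop :=
  forall p, sclosure d C p -> C p.

Definition convex_body (d : nat) (D : vec -> Prop) : Prop :=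
  spherically_convex d D /\ sclosed d D /\ exists p, sinterior d D p.

Definition has_diameter (d : nat) (D : vec -> Prop) (delta : R) : Prop :=
  (exists a b, D a /\ D b /\ sdist d a b = delta) /\
  (forall a b, D a -> D b -> sdist d a b <= delta).

Definition constant_diameter (d : nat) (D : vec -> Prop) (delta : R) : Prop :=
  convex_body d D /\ has_diameter d D delta /\
  forall p, sboundary d D p ->
    exists p', sboundary d D p' /\ sdist d p p' = delta.

(* Main.v *)
Require Import Defs.
From Stdlib Require Import Reals.
From Stdlib Require Import Lra Lia Psatz Classical FunctionalExtensionality.
Open Scope R_scope.

Lemma dot_linl n s t a b z :
  dot n (fun i => s * a i + t * b i) z = s * dot n a z + t * dot n b z.
Proof. induction n; simpl; [ring| rewrite IHn; ring]. Qed.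

Lemma dot_sym n x y : dot n x y = dot n y x.
Proof. induction n; simpl; [ring| rewrite IHn; ring]. Qed.

Lemma dot_linr n s t a b z :
  dot n z (fun i => s * a i + t * b i) = s * dot n z a + t * dot n z b.
Proof. induction n; simpl; [ring| rewrite IHn; ring]. Qed.

Lemma dot_nonneg n x : 0 <= dot n x x.
Proof. induction n; simpl; nra. Qed.

Lemma dot_ge_sq n x i : (i < n)%nat -> x i * x i <= dot n x x.
Proof.
  induction n; intros H; [lia|]. simpl.
  destruct (Nat.eq_dec i n) as [->|Hn].
  - pose proof (dot_nonneg n x); lra.
  - assert (x i * x i <= dot n x x) by (apply IHn; lia). nra.
Qed.

Lemma acos_ge d x : 0 < d -> d < PI/2 -> acos x <= d -> cos d <= x.
Proof.
  intros H0 H1 H.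
  destruct (Rle_dec x (-1)) as [Hx|Hx].
  - unfold acos in H. destruct (Rle_dec x (-1)); [|contradiction].
    pose proof PI_RGT_0; lra.
  - destruct (Rle_dec 1 x) as [Hy|Hy].
    + pose proof (COS_bound d); lra.
    + assert (Hb : -1 <= x <= 1) by lra.
      pose proof (cos_acos x Hb) as Hc.
      pose proof (acos_bound x) as Hab.
      destruct (Rle_lt_or_eq_dec _ _ H) as [Hl|He].
      * pose proof (cos_decreasing_1 (acos x) d ltac:(lra) ltac:(lra)
           ltac:(lra) ltac:(lra) Hl). lra.
      * rewrite <- He. lra.
Qed.

Lemma acos_eq d x : 0 < d -> d < PI/2 -> acos x = d -> x = cos d.
Proof.
  intros H0 H1 H.
  unfold acos in H.
  destruct (Rle_dec x (-1)) as [Hx|Hx]. { pose proof PI_RGT_0; lra. }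
  destruct (Rle_dec 1 x) as [Hy|Hy]. { lra. }
  assert (Hb : -1 <= x <= 1) by lra.
  pose proof (cos_acos x Hb) as Hc. unfold acos in Hc.
  destruct (Rle_dec x (-1)); [contradiction|].
  destruct (Rle_dec 1 x); [contradiction|]. rewrite H in Hc. lra.
Qed.

Theorem proposition1 (d : nat) (delta : R) (D : vec -> Prop) :
  (2 <= d)%nat -> 0 < delta -> delta < PI / 2 ->
  constant_diameter d D delta ->
  ~ (exists a b : vec,
        on_sphere d a /\ on_sphere d b /\ a <> b /\ ~ antipodal a b /\
        (forall p, arc d a b p -> sboundary d D p)).
Proof.
  intros Hd H0 H1 [[Hconv [Hcl _]] [[_ Hdiam] Hcd]] [a [b [Ha [Hb [Hab [Hna Harc]]]]]].
  destruct Ha as [Haa Ha0]. destruct Hb as [Hbb Hb0].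
  set (ab := dot (S d) a b).
  assert (Hlt1 : ab < 1).
  { destruct (classic (exists i, a i <> b i)) as [[i Hi]|Hn].
    - assert (Hi' : (i < S d)%nat).
      { destruct (Nat.lt_ge_cases i (S d)) as [h|h]; [exact h|].
        exfalso; apply Hi. rewrite (Ha0 i h), (Hb0 i h). reflexivity. }
      pose proof (dot_ge_sq (S d) (fun j => 1 * a j + (-1) * b j) i Hi') as Hq.
      rewrite dot_linl, !dot_linr in Hq.
      rewrite (dot_sym _ b a), Haa, Hbb in Hq. fold ab in Hq.
      assert (E : (1 * a i + -1 * b i) * (1 * a i + -1 * b i) = (a i - b i) * (a i - b i)) by ring.
      assert ((a i - b i) * (a i - b i) > 0).
      { assert (a i - b i <> 0) by lra. clear -H. apply Rsqr_pos_lt in H. unfold Rsqr in H. lra. }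
      lra.
    - exfalso; apply Hab; apply functional_extensionality; intro i.
      apply NNPP; intro h; apply Hn; eauto. }
  assert (Hgt : -1 < ab).
  { destruct (classic (exists i, b i <> - a i)) as [[i Hi]|Hn].
    - assert (Hi' : (i < S d)%nat).
      { destruct (Nat.lt_ge_cases i (S d)) as [h|h]; [exact h|].
        exfalso; apply Hi. rewrite (Ha0 i h), (Hb0 i h). lra. }
      pose proof (dot_ge_sq (S d) (fun j => 1 * a j + 1 * b j) i Hi') as Hq.
      rewrite dot_linl, !dot_linr in Hq.
      rewrite (dot_sym _ b a), Haa, Hbb in Hq. fold ab in Hq.
      assert (E : (1 * a i + 1 * b i) * (1 * a i + 1 * b i) = (a i + b i) * (a i + b i)) by ring.
      assert ((a i + b i) * (a i + b i) > 0).
      { assert (a i + b i <> 0) by lra. clear -H. apply Rsqr_pos_lt in H. unfold Rsqr in H. lra. }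
      lra.
    - exfalso; apply Hna; unfold antipodal, vopp; apply functional_extensionality; intro i.
      apply NNPP; intro h; apply Hn; eauto. }
  set (L := sqrt (2 + 2 * ab)).
  assert (HL2 : L * L = 2 + 2 * ab) by (apply sqrt_sqrt; lra).
  assert (HLp : 0 < L) by (apply sqrt_lt_R0; lra).
  set (s := / L).
  assert (Hs : s * L = 1) by (unfold s; field; lra).
  assert (Hs0 : 0 < s) by (unfold s; apply Rinv_0_lt_compat; lra).
  assert (Hs2 : 1/2 < s).
  { assert (HL : L < 2).
    { destruct (Rlt_or_le L 2) as [h|h]; auto.
      assert (2 * 2 <= L * L) by (apply Rmult_le_compat; lra). lra. }
    assert (s * 2 > s * L) by (apply Rmult_lt_compat_l; lra). lra. }
  set (m := fun i => s * a i + s * b i).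
  assert (Hm : arc d a b m).
  { split.
    - split.
      + unfold m. rewrite dot_linl, !dot_linr.
        rewrite (dot_sym _ b a), Haa, Hbb. fold ab.
        replace (s * (s * 1 + s * ab) + s * (s * ab + s * 1)) with (s * s * (2 + 2 * ab)) by ring.
        rewrite <- HL2. replace (s * s * (L * L)) with ((s * L) * (s * L)) by ring.
        rewrite Hs; ring.
      + intros i Hi. unfold m. rewrite (Ha0 i Hi), (Hb0 i Hi); ring.
    - exists s, s; repeat split; lra. }
  assert (HaA : arc d a b a).
  { split; [split; auto|]. exists 1, 0; repeat split; try lra.
    apply functional_extensionality; intro i; ring. }
  assert (HbA : arc d a b b).
  { split; [split; auto|]. exists 0, 1; repeat split; try lra.
    apply functional_extensionality; intro i; ring. }
  assert (HD : forall p, arc d a b p -> D p).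
  { intros p Hp. apply Hcl. apply (Harc p Hp). }
  destruct (Hcd m (Harc m Hm)) as [m' [Hm' Hdist]].
  assert (Dm' : D m') by (apply Hcl; apply Hm').
  pose proof (acos_eq _ _ H0 H1 Hdist) as Em.
  pose proof (acos_ge _ _ H0 H1 (Hdiam a m' (HD a HaA) Dm')) as Ea.
  pose proof (acos_ge _ _ H0 H1 (Hdiam b m' (HD b HbA) Dm')) as Eb.
  unfold m in Em. rewrite dot_linl in Em.
  assert (Hc : 0 < cos delta) by (apply cos_gt_0; lra).
  assert (s * cos delta <= s * dot (S d) a m') by (apply Rmult_le_compat_l; lra).
  assert (s * cos delta <= s * dot (S d) b m') by (apply Rmult_le_compat_l; lra).
  assert (s * cos delta > 1/2 * cos delta) by (apply Rmult_lt_compat_r; lra).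
  lra.
Qed.
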